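(* Let $E, F, G$ be Banach lattices. (1) The set of almost Grothendieck operators from $E$ to $F$ is a closed linear subspace of $L(E;F)$, and if $T: E \to F$ is almost Grothendieck and $S: H \to E$ is any bounded linear operator from a Banach space $H$, then $T \circ S$ is almost Grothendieck. (2) If $T: E \to F$ is almost Grothendieck and $R: F \to G$ is a bounded operator whose adjoint $R': G' \to F'$ maps disjoint sequences to disjoint sequences, then $R \circ T: E \to G$ is almost Grothendieck.
   Context: A bounded operator $T: X \to F$ from a Banach space $X$ to a Banach lattice $F$ is almost Grothendieck if $T'y_n' \to 0$ weakly in $X'$ for every disjoint weak* null sequence $(y_n')$ in the dual Banach lattice $F'$. $L(E;F)$ denotes the Banach space of bounded linear operators with the operator norm. *)

(* Defs.v *)
(* Banach spaces = completeNormedModType R over R : realType. Duals are represented as functions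
   X -> R satisfying the predicate [dual]. *)
From HB Require Import structures.
From mathcomp Require Import all_boot all_order all_algebra.
From mathcomp Require Import all_classical all_reals all_analysis.
Set Implicit Arguments. Unset Strict Implicit. Unset Printing Implicit Defensive.
Import Order.TTheory GRing.Theory Num.Theory.
Import numFieldNormedType.Exports.
Local Open Scope classical_set_scope.
Local Open Scope ring_scope.

Section Defs.
Variable R : realType.

Definition bounded_linear (U V : normedModType R) (T : U -> V) : Prop :=
  (forall (a : R) (x y : U), T (a *: x + y) = a *: T x + T y) /\
  exists C : R, forall x, `|T x| <= C * `|x|.

Definition dual (X : normedModType R) (f : X -> R) : Prop :=
  (forall (a : R) (x y : X), f (a *: x + y) = a * f x + f y) /\
  exists C : R, forall x, `|f x| <= C * `|x|.

(* bounded linear functionals on X' (elements of the bidual X''), with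
   |Phi f| <= C ||f|| written via the definition of the operator norm *)
Definition bidual (X : normedModType R) (Phi : (X -> R) -> R) : Prop :=
  (forall (a : R) (f g : X -> R), dual f -> dual g ->
      Phi (fun x => a * f x + g x) = a * Phi f + Phi g) /\
  exists C : R, forall f : X -> R, dual f ->
      forall M : R, 0 <= M -> (forall x, `|f x| <= M * `|x|) ->
      `|Phi f| <= C * M.

Definition weak_null_dual (X : normedModType R) (g : nat -> X -> R) : Prop :=
  forall Phi : (X -> R) -> R, bidual Phi -> (fun n => Phi (g n)) @ \oo --> (0 : R).

Definition weakstar_null (X : normedModType R) (g : nat -> X -> R) : Prop :=
  forall x : X, (fun n => g n x) @ \oo --> (0 : R).

Definition is_sup2 (X : Type) (le : X -> X -> Prop) (a b s : X) : Prop :=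
  [/\ le a s, le b s & forall u, le a u -> le b u -> le s u].

Record banach_lattice (X : normedModType R) (le : X -> X -> Prop) : Prop := {
  bl_refl : forall x, le x x;
  bl_antisym : forall x y, le x y -> le y x -> x = y;
  bl_trans : forall x y z, le x y -> le y z -> le x z;
  bl_add : forall x y z, le x y -> le (x + z) (y + z);
  bl_scale : forall (a : R) x y, 0 <= a -> le x y -> le (a *: x) (a *: y);
  bl_sup : forall x y, exists s, is_sup2 le x y s;
  bl_norm : forall x y mx my, is_sup2 le x (- x) mx -> is_sup2 le y (- y) my ->
             le mx my -> `|x| <= `|y|
}.

Definition dual_le (X : normedModType R) (le : X -> X -> Prop) (f g : X -> R) :=
  forall x, le 0 x -> f x <= g x.

(* disjointness in the dual Banach lattice F': |f| /\ |g| = 0, i.e. the only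
   positive element of F' below both |f| = sup(f,-f) and |g| = sup(g,-g) is 0;
   "h <= |f|" is written as "h <= every upper bound of {f, -f} in F'". *)
Definition dual_disjoint (X : normedModType R) (le : X -> X -> Prop) (f g : X -> R) :=
  forall h : X -> R, dual h -> dual_le le (fun _ => 0) h ->
    (forall u, dual u -> dual_le le f u -> dual_le le (fun x => - f x) u ->
        dual_le le h u) ->
    (forall u, dual u -> dual_le le g u -> dual_le le (fun x => - g x) u ->
        dual_le le h u) ->
    forall x, h x = 0.

Definition disjoint_seq (X : normedModType R) (le : X -> X -> Prop) (g : nat -> X -> R) :=
  forall n m, n <> m -> dual_disjoint le (g n) (g m).

(* almost Grothendieck operators T : X -> F, F a Banach lattice with order le;
   the adjoint is T' y' = y' \o T *)
Definition almost_grothendieck (X F : normedModType R) (le : F -> F -> Prop)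
  (T : X -> F) : Prop :=
  bounded_linear T /\
  forall g : nat -> F -> R, (forall n, dual (g n)) -> disjoint_seq le g ->
    weakstar_null g -> weak_null_dual (fun n x => g n (T x)).

End Defs.

(* Main.v *)
Require Import Defs.
From HB Require Import structures.
From mathcomp Require Import all_boot all_order all_algebra.
From mathcomp Require Import all_classical all_reals all_analysis.
From mathcomp Require Import ring lra.
Import Order.TTheory GRing.Theory Num.Theory.
Import numFieldNormedType.Exports.
Local Open Scope classical_set_scope.
Local Open Scope ring_scope.

Set Implicit Arguments. Unset Strict Implicit.
Section H.
Variable R : realType.

Lemma dual0 (X : normedModType R) (f : X -> R) : dual f -> f 0 = 0.
Proof.
case=> lf _; have := lf (-1) 0 0.
by rewrite scaleN1r oppr0 addr0 mulN1r addNr.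
Qed.

Lemma dualZ (X : normedModType R) (f : X -> R) a x : dual f -> f (a *: x) = a * f x.
Proof.
move=> hf; have := (proj1 hf) a x 0; rewrite !addr0 (dual0 hf) addr0 //.
Qed.

Lemma dualD (X : normedModType R) (f : X -> R) x y : dual f -> f (x + y) = f x + f y.
Proof.
move=> hf; have := (proj1 hf) 1 x y; rewrite scale1r mul1r //.
Qed.

Lemma bl0 (U V : normedModType R) (T : U -> V) : bounded_linear T -> T 0 = 0.
Proof.
case=> lf _; have := lf (-1) 0 0.
by rewrite scaleN1r oppr0 addr0 scaleN1r addNr.
Qed.

Lemma blZ (U V : normedModType R) (T : U -> V) a x : bounded_linear T -> T (a *: x) = a *: T x.
Proof.
move=> hf; have := (proj1 hf) a x 0; rewrite !addr0 (bl0 hf) addr0 //.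
Qed.

Lemma blD (U V : normedModType R) (T : U -> V) x y : bounded_linear T -> T (x + y) = T x + T y.
Proof.
move=> hf; have := (proj1 hf) 1 x y; rewrite !scale1r //.
Qed.

Lemma bl_bound (U V : normedModType R) (T : U -> V) : bounded_linear T ->
  exists C, 0 <= C /\ forall x, `|T x| <= C * `|x|.
Proof.
case=> _ [C hC]; exists `|C|; split => // x.
apply: (le_trans (hC x)); apply: ler_wpM2r => //; exact: ler_norm.
Qed.

Lemma dual_bound (U : normedModType R) (f : U -> R) : dual f ->
  exists C, 0 <= C /\ forall x, `|f x| <= C * `|x|.
Proof.
case=> _ [C hC]; exists `|C|; split => // x.
apply: (le_trans (hC x)); apply: ler_wpM2r => //; exact: ler_norm.
Qed.

Lemma dual_comp (U V : normedModType R) (f : V -> R) (T : U -> V) :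
  dual f -> bounded_linear T -> dual (fun x => f (T x)).
Proof.
move=> hf hT; split.
  by move=> a x y; rewrite (proj1 hT) (proj1 hf).
have [C [C0 hC]] := dual_bound hf; have [D [D0 hD]] := bl_bound hT.
exists (C * D) => x; apply: (le_trans (hC _)); rewrite -mulrA.
by apply: ler_wpM2l.
Qed.

Lemma bidual0 (X : normedModType R) (Phi : (X -> R) -> R) : bidual Phi -> Phi (fun _ => 0) = 0.
Proof.
case=> _ [C hC]; apply/eqP; rewrite -normr_le0.
have := hC (fun _ => 0) _ 0 (lexx _); rewrite mulr0; apply.
  split; first by move=> *; rewrite mulr0 addr0.
  by exists 0 => x; rewrite normr0 mul0r.
by move=> x; rewrite normr0 mul0r.
Qed.

Lemma dual_unif (F : completeNormedModType R) (g : nat -> F -> R) :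
  (forall n, dual (g n)) -> weakstar_null g ->
  exists K : R, 0 <= K /\ forall n x, `|g n x| <= K * `|x|.
Proof.
move=> hg hw.
have UB : uniform_bounded (range (g : nat -> F -> R^o)).
apply: Banach_Steinhauss.
- move=> f [n _ <-]; split.
    have [C [C0 hC]] := dual_bound (hg n).
    move=> r; exists (C * `|r|) => x xr; apply: (le_trans (hC x)).
    apply: ler_wpM2l => //; apply: (le_trans xr); exact: ler_norm.
  by move=> a u v; rewrite (proj1 (hg n)).
- move=> x; have : cvgn (fun n => g n x) by apply/cvg_ex; exists 0; exact: hw.
  move/cvg_seq_bounded => [M0 [_ hM]].
  exists (M0 + 1) => f [n _ <-]; apply: (hM (M0 + 1)) => //.
  by rewrite ltrDl.
have [M hM] := UB 1.
exists `|M|; split => // n x.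
have [->|x0] := eqVneq x 0; first by rewrite (dual0 (hg n)) !normr0 mulr0.
have nx : 0 < `|x| by rewrite normr_gt0.
have -> : g n x = `|x| * g n (`|x|^-1 *: x).
  by rewrite -(dualZ _ _ (hg n)) scalerA divff ?scale1r // gt_eqF.
rewrite normrM normr_id mulrC ler_pM2r //.
apply: (le_trans _ (ler_norm _)); apply: hM; first by exists n.
by rewrite normrZ normrV ?unitfE ?gt_eqF // normr_id mulVf // gt_eqF.
Qed.

Lemma bl_zero (U V : normedModType R) : bounded_linear (fun _ : U => (0 : V)).
Proof.
split; first by move=> *; rewrite scaler0 addr0.
by exists 0 => x; rewrite normr0 mul0r.
Qed.

Lemma bl_add (U V : normedModType R) (T S : U -> V) :
  bounded_linear T -> bounded_linear S -> bounded_linear (fun x => T x + S x).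
Proof.
move=> hT hS; split.
  move=> a x y; rewrite (proj1 hT) (proj1 hS) scalerDr.
  by rewrite -!addrA; congr (_ + _); rewrite addrCA.
have [C [C0 hC]] := bl_bound hT; have [D [D0 hD]] := bl_bound hS.
exists (C + D) => x; apply: (le_trans (ler_normD _ _)).
by rewrite mulrDl; apply: lerD.
Qed.

Lemma bl_scale (U V : normedModType R) (T : U -> V) a :
  bounded_linear T -> bounded_linear (fun x => a *: T x).
Proof.
move=> hT; split.
  by move=> b x y; rewrite (proj1 hT) scalerDr !scalerA mulrC.
have [C [C0 hC]] := bl_bound hT.
exists (`|a| * C) => x; rewrite normrZ -mulrA; apply: ler_wpM2l => //.
Qed.

Lemma bl_sub (U V : normedModType R) (T S : U -> V) :
  bounded_linear T -> bounded_linear S -> bounded_linear (fun x => T x - S x).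
Proof.
move=> hT hS; have := bl_add hT (bl_scale (-1) hS).
by under eq_fun do rewrite scaleN1r.
Qed.

Lemma bl_comp (U V W : normedModType R) (T : V -> W) (S : U -> V) :
  bounded_linear T -> bounded_linear S -> bounded_linear (fun x => T (S x)).
Proof.
move=> hT hS; split.
  by move=> a x y; rewrite (proj1 hS) (proj1 hT).
have [C [C0 hC]] := bl_bound hT; have [D [D0 hD]] := bl_bound hS.
exists (C * D) => x; apply: (le_trans (hC _)); rewrite -mulrA.
by apply: ler_wpM2l.
Qed.

Lemma bidualZ (X : normedModType R) (Phi : (X -> R) -> R) a f : bidual Phi -> dual f ->
  Phi (fun x => a * f x) = a * Phi f.
Proof.
move=> hP hf.
have h0 : dual (fun _ : X => (0:R)).
  split; first by move=> *; rewrite mulr0 addr0.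
  by exists 0 => x; rewrite normr0 mul0r.
have := (proj1 hP) a f _ hf h0; rewrite (bidual0 hP) addr0 => <-.
by congr Phi; apply: funext => x; rewrite addr0.
Qed.

Lemma bidualD (X : normedModType R) (Phi : (X -> R) -> R) f g : bidual Phi -> dual f -> dual g ->
  Phi (fun x => f x + g x) = Phi f + Phi g.
Proof.
move=> hP hf hg; have := (proj1 hP) 1 f g hf hg; rewrite mul1r => <-.
by congr Phi; apply: funext => x; rewrite mul1r.
Qed.

Variables (E F G : completeNormedModType R) (leF : F -> F -> Prop) (leG : G -> G -> Prop).

Lemma ag_zero : almost_grothendieck leF (fun _ : E => (0 : F)).
Proof.
split; first exact: bl_zero.
move=> g hg _ _ Phi hP.
have -> : (fun n => Phi (fun x => g n 0)) = fun _ => 0.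
  apply: funext => n; rewrite (dual0 (hg n)); exact: bidual0.
exact: cvg_cst.
Qed.

Lemma ag_add (T S : E -> F) : almost_grothendieck leF T -> almost_grothendieck leF S ->
       almost_grothendieck leF (fun x => T x + S x).
Proof.
move=> [hT aT] [hS aS]; split; first exact: bl_add.
move=> g hg dg wg Phi hP.
have -> : (fun n => Phi (fun x => g n (T x + S x))) =
   fun n => Phi (fun x => g n (T x)) + Phi (fun x => g n (S x)).
  apply: funext => n; rewrite -bidualD //; try exact: dual_comp.
  by congr Phi; apply: funext => x; rewrite (dualD _ _ (hg n)).
rewrite -[0]addr0; exact: (cvgD (aT g hg dg wg Phi hP) (aS g hg dg wg Phi hP)).
Qed.

Lemma ag_scale a (T : E -> F) : almost_grothendieck leF T ->
       almost_grothendieck leF (fun x => a *: T x).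
Proof.
move=> [hT aT]; split; first exact: bl_scale.
move=> g hg dg wg Phi hP.
have -> : (fun n => Phi (fun x => g n (a *: T x))) =
   fun n => a * Phi (fun x => g n (T x)).
  apply: funext => n; rewrite -bidualZ //; try exact: dual_comp.
  by congr Phi; apply: funext => x; rewrite (dualZ _ _ (hg n)).
rewrite -(mulr0 a); exact: (@cvgMr _ _ _ _ _ a _ (aT g hg dg wg Phi hP)).
Qed.

Lemma ag_compr (H : completeNormedModType R) (T : E -> F) (S : H -> E) :
       almost_grothendieck leF T -> bounded_linear S ->
       almost_grothendieck leF (fun h => T (S h)).
Proof.
move=> [hT aT] hS; split; first exact: bl_comp.
move=> g hg dg wg Phi hP.
have [D [D0 hD]] := bl_bound hS.
have hPsi : bidual (fun f : E -> R => Phi (fun h => f (S h))).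
  split.
    move=> a f f' hf hf'; exact: (proj1 hP) a _ _ (dual_comp hf hS) (dual_comp hf' hS).
  have [C hC] := proj2 hP.
  exists (C * D) => f hf M M0 hM; rewrite -mulrA (mulrC D).
  apply: hC; first exact: dual_comp.
    exact: mulr_ge0.
  move=> h; apply: (le_trans (hM _)); rewrite -mulrA; exact: ler_wpM2l.
exact: (aT g hg dg wg _ hPsi).
Qed.

Lemma ag_compl (T : E -> F) (Rop : F -> G) :
     almost_grothendieck leF T -> bounded_linear Rop ->
     (forall g : nat -> G -> R, (forall n, dual (g n)) -> disjoint_seq leG g ->
        disjoint_seq leF (fun n y => g n (Rop y))) ->
     almost_grothendieck leG (fun x => Rop (T x)).
Proof.
move=> [hT aT] hR hd; split; first exact: bl_comp.
move=> g hg dg wg.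
apply: (aT (fun n y => g n (Rop y))).
- move=> n; exact: dual_comp.
- exact: hd.
- move=> y; exact: wg.
Qed.


Lemma ag_closed (Tn : nat -> E -> F) (T : E -> F) :
  (forall n, almost_grothendieck leF (Tn n)) -> bounded_linear T ->
  (forall e : R, 0 < e -> \forall n \near \oo, forall x : E, `|Tn n x - T x| <= e * `|x|) ->
  almost_grothendieck leF T.
Proof.
move=> aTn hT hc; split => // g hg dg wg Phi hP.
have [K [K0 hK]] := dual_unif hg wg.
have [C hC] := proj2 hP.
apply/cvgrPdist_le => e e0.
have nC := normr_ge0 C.
set A := (`|C| + 1) * (K + 1).
have A0 : 0 < A by apply: mulr_gt0; lra.
set d := e / (2 * A).
have d0 : 0 < d by apply: divr_gt0 => //; apply: mulr_gt0.
have [N _ HN] := hc d d0.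
have [hTN aTN] := aTn N.
have hsub := bl_sub hTN hT.
have e20 : 0 < e / 2 by apply: divr_gt0.
have := aTN g hg dg wg Phi hP; move/cvgrPdist_le/(_ _ e20).
apply: filterS => n hn.
set h := fun x => g n (Tn N x - T x).
have hh : dual h := dual_comp (hg n) hsub.
have hf := dual_comp (hg n) hTN.
have eq : Phi (fun x => g n (T x)) = -1 * Phi h + Phi (fun x => g n (Tn N x)).
  rewrite -(proj1 hP) //; congr Phi; apply: funext => x.
  rewrite /h -(scaleN1r (T x)) (dualD _ _ (hg n)) (dualZ _ _ (hg n)); ring.
have bh : `|Phi h| <= C * (K * d).
  apply: hC => //; first by apply: mulr_ge0 => //; exact: ltW.
  move=> x; apply: (le_trans (hK n _)); rewrite -mulrA; apply: ler_wpM2l => //.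
  by apply: HN; rewrite /= leqnn.
have Ad : A * d = e / 2 by rewrite /d; field; rewrite gt_eqF.
have CK : C * (K * d) <= e / 2.
  rewrite -Ad /A.
  have Kd0 : 0 <= K * d by apply: mulr_ge0 => //; exact: ltW.
  have -> : (`|C| + 1) * (K + 1) * d = (`|C| + 1) * (K * d + d) by ring.
  have := ler_norm C; nra.
rewrite sub0r normrN eq.
rewrite sub0r normrN in hn.
apply: (le_trans (ler_normD _ _)).
rewrite mulN1r normrN; lra.
Qed.

End H.

Theorem mainTheorem12 (R : realType)
  (E F G : completeNormedModType R)
  (leE : E -> E -> Prop) (leF : F -> F -> Prop) (leG : G -> G -> Prop)
  (hE : banach_lattice leE) (hF : banach_lattice leF) (hG : banach_lattice leG) :
  (* (1a) the almost Grothendieck operators form a linear subspace of L(E;F) *)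
  (almost_grothendieck leF (fun _ : E => (0 : F)) /\
   (forall T S : E -> F, almost_grothendieck leF T -> almost_grothendieck leF S ->
       almost_grothendieck leF (fun x => T x + S x)) /\
   (forall (a : R) (T : E -> F), almost_grothendieck leF T ->
       almost_grothendieck leF (fun x => a *: T x)) /\
  (* (1b) which is closed in the operator norm *)
   (forall (Tn : nat -> E -> F) (T : E -> F),
       (forall n, almost_grothendieck leF (Tn n)) -> bounded_linear T ->
       (forall e : R, 0 < e -> \forall n \near \oo,
           forall x : E, `|Tn n x - T x| <= e * `|x|) ->
       almost_grothendieck leF T) /\
  (* (1c) right composition with bounded operators from a Banach space H *)
   (forall (H : completeNormedModType R) (T : E -> F) (S : H -> E),
       almost_grothendieck leF T -> bounded_linear S ->
       almost_grothendieck leF (fun h => T (S h)))) /\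
  (* (2) left composition with R whose adjoint preserves disjoint sequences *)
  (forall (T : E -> F) (Rop : F -> G),
     almost_grothendieck leF T -> bounded_linear Rop ->
     (forall g : nat -> G -> R, (forall n, dual (g n)) -> disjoint_seq leG g ->
        disjoint_seq leF (fun n y => g n (Rop y))) ->
     almost_grothendieck leG (fun x => Rop (T x))).
Proof.
split; [split; [exact: ag_zero | split; [exact: ag_add | split; [exact: ag_scale | split]]] | exact: ag_compl].
- exact: ag_closed.
- move=> H T S; exact: ag_compr.
Qed.
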